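(* Let $p\geq5$, $n=p-1$, and let $G$ be $N$ or $\mathbb{G}$. (1) For $s>\mathrm{vcd}(G)$, the groups $H^s(G,\mathbf{E}_t)\cong\widehat{H}^s(G,\mathbf{E}_t)$ are zero unless $t=2n\epsilon+2pnl$ for some $\epsilon\in\{0,1\}$ and $l\in\mathbb{Z}$. (2) In the $\beta$-inverted homotopy fixed point spectral sequence $\beta^{-1}E_r^{s,t}(G,\mathbf{E})$, let $x\in\beta^{-1}E_2^{t+1,t}(G,\mathbf{E})\cong\widehat{H}^{t+1}(G,\mathbf{E}_t)$ with $n^2\leq t\leq 4pn$. If $x$ survives to the $E_{2n+2}=E_{2n^2+1}$-page, then $x$ is not the target of a $d_{2n^2+1}$-differential.
   Context: Setting: $n=p-1$, $\mathbb{G}$ the Morava stabilizer group of the Honda formal group law of height $n$, $\mathbf{E}$ the Lubin–Tate spectrum, $\mathbf{E}_t=\pi_t\mathbf{E}$; $C_p\subset\mathbb{G}$ generated by a primitive $p$-th root of unity, $N=N_{\mathbb{G}}(C_p)$; $\mathrm{vcd}(N)=n$, $\mathrm{vcd}(\mathbb{G})=n^2$. $\widehat{H}^*$ is Farrell–Tate cohomology, and $\widehat{H}^*(G,\mathbf{E}_* )\cong\mathbb{F}_p[\alpha,\beta^{\pm1},\Delta^{\pm1}]/(\alpha^2)\otimes\Lambda(a_0,\dots,a_{n-1})$ with $(s,t)$-bidegrees $|\alpha|=(1,2n)$, $|\beta|=(2,2pn)$, $|\Delta|=(0,2pn^2)$, $|a_i|=(1,2p^2ni)$. The $\beta$-inverted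 homotopy fixed point spectral sequence is the localization, at a lift of the class $\beta$ detecting $\beta_1\in\pi_{2pn-2}S^0$, of the $K(n)$-local $\mathbf{E}$-based Adams–Novikov (homotopy fixed point) spectral sequence for $\mathbf{E}^{hG}$; its $E_2$-page is $\widehat{H}^*(G,\mathbf{E}_* )$, differentials are $d_r:E_r^{s,t}\to E_r^{s+r,t+r-1}$, and it is a direct sum, over the monomial basis of $\Lambda(a_0,\dots,a_{n-1})$, of shifts of the spectral sequence with $E_2=\mathbb{F}_p[\alpha,\beta^{\pm1},\Delta^{\pm1}]/(\alpha^2)$ and differentials generated by $d_{2n+1}(\Delta)=\alpha\beta^n$, $d_{2n^2+1}(\Delta^n\alpha)=\beta^{n^2+1}$. *)

(* Defs.v *)
From HB Require Import structures.
From mathcomp Require Import all_boot all_order all_algebra.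
Set Implicit Arguments. Unset Strict Implicit. Unset Printing Implicit Defensive.
Import Order.TTheory GRing.Theory Num.Theory.
Local Open Scope ring_scope.

(* The two groups G = N = N_GG(C_p) and G = GG (Morava stabilizer group). *)
Inductive grp := GN | GMorava.

Definition vcd (p : nat) (G : grp) : int :=
  match G with GN => (p.-1)%:Z | GMorava => (p.-1 ^ 2)%:Z end.

(* Monomial basis of  F_p[alpha, beta^{+-1}, Delta^{+-1}]/(alpha^2) (x)
   Lambda(a_0, ..., a_{n-1}):
     alpha^eps * beta^jj * Delta^kk * prod_{i in ext} a_i . *)
Record mono (n : nat) := Mono {
  eps : bool; jj : int; kk : int; ext : {set 'I_n} }.

Definition sdeg (n : nat) (m : mono n) : int :=
  (eps m)%:Z + 2 * jj m + (#|ext m|)%:Z.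

Definition tdeg (p : nat) (m : mono p.-1) : int :=
  let n := (p.-1)%:Z in let q := p%:Z in
  2 * n * (eps m)%:Z + 2 * q * n * jj m + 2 * q * n ^+ 2 * kk m
  + 2 * q ^+ 2 * n * (\sum_(i in ext m) (i : nat))%:Z.

(* An element of E_2 (= Farrell-Tate cohomology) is a coefficient function on
   monomials; it lies in E_2^{s,t} when supported in bidegree (s,t)
   (each bidegree only contains finitely many monomials). *)
Definition elt (p : nat) := mono p.-1 -> 'F_p.

Definition in_bideg (p : nat) (s t : int) (x : elt p) : Prop :=
  forall m, x m != 0 -> sdeg m = s /\ tdeg m = t.

(* d_{2n+1}: the derivation with d(Delta) = alpha beta^n, so
   d(beta^j Delta^k a_S) = k alpha beta^(j+n) Delta^(k-1) a_S  (up to the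
   sign irrelevant for kernels/images), d(alpha ...) = 0.
   Coefficientwise: *)
Definition d_first (p : nat) (x : elt p) : elt p :=
  fun m => if eps m then
             (kk m + 1)%:~R * x (Mono false (jj m - (p.-1)%:Z) (kk m + 1) (ext m))
           else 0.

(* d_{2n^2+1} on E_{2n+2} = E_{2n^2+1} = H(E_2, d_{2n+1}), generated (Leibniz,
   linearity over the permanent cycles beta, Delta^p) by
   d(Delta^n alpha) = beta^(n^2+1):
     alpha beta^j Delta^k a_S |-> beta^(j+n^2+1) Delta^(k-n) a_S  if k = n mod p,
     every other monomial     |-> 0.
   This map on E_2-representatives sends d_{2n+1}-cycles to cycles and
   d_{2n+1}-boundaries to 0, hence induces d_{2n^2+1}. *)
Definition d_second (p : nat) (y : elt p) : elt p :=
  fun m => if eps m then 0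
           else if (p%:Z %| kk m)%Z then
             y (Mono true (jj m - ((p.-1) ^ 2)%:Z - 1) (kk m + (p.-1)%:Z) (ext m))
           else 0.

(* Main.v *)
Require Import Defs.
From HB Require Import structures.
From mathcomp Require Import all_boot all_order all_algebra.
From mathcomp Require Import zify ring.
From Stdlib Require Import FunctionalExtensionality.
Import Order.TTheory GRing.Theory Num.Theory.
Local Open Scope ring_scope.

Lemma pure (N t J c s0 sg : int) :
  4 <= N -> N * N <= t -> t <= 4 * (N+1) * N -> 0 <= s0 <= N -> 0 <= sg ->
  1 + 2 * J + s0 = t - 2 * (N * N) ->
  2 * N + 2 * (N+1) * N * J + 2 * (N+1) * (N*N) * (c * (N+1) + N)
   + 2 * (N+1) * (N+1) * N * sg = t - 2 * (N * N) -> False.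
Proof.
move=> hN h1 h2 /andP[h3 h4] h5 e1 e2.
set B := J + N * (c * (N+1) + N) + (N+1) * sg.
have e3 : 2 * N * (1 + (N+1) * B) = t - 2 * (N*N) by rewrite -e2 /B; ring.
have hB1 : B <= 1.
  case: (lerP B 1) => // hB.
  have : 2 * N * (N+1) * 2 <= 2 * N * (N+1) * B by rewrite ler_pM2l //; lia.
  lia.
have hB0 : 0 <= B.
  case: (lerP 0 B) => // hB.
  have : 2 * N * (N+1) * B <= 2 * N * (N+1) * (-1) by rewrite ler_pM2l //; lia.
  lia.
have hJ : J = B - 1 - (N+1) * (N - 1 + N * c + sg) by rewrite /B; ring.
move: hJ; set r := (N - 1 + N * c + sg) => hJ.
have : B = 0 \/ B = 1 by lia.
case=> hB; rewrite hB in e3 hJ.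
- have : r <= -1 \/ 0 <= r by lia. case=> hr.
  + have : (N+1) * r <= (N+1) * (-1) by rewrite ler_pM2l //; lia.
    lia.
  + have : (N+1) * 0 <= (N+1) * r by rewrite ler_pM2l //; lia.
    lia.
- have : r <= -N-1 \/ -N <= r by lia. case=> hr.
  + have : (N+1) * r <= (N+1) * (-N-1) by rewrite ler_pM2l //; lia.
    lia.
  + have : (N+1) * (-N) <= (N+1) * r by rewrite ler_pM2l //; lia.
    lia.
Qed.

Lemma key (p : nat) (t : int) (y : elt p) : (5 <= p)%N ->
  ((p.-1) ^ 2)%:Z <= t -> t <= 4 * p%:Z * (p.-1)%:Z ->
  in_bideg (t + 1 - (2 * ((p.-1) ^ 2)%:Z + 1)) (t - 2 * ((p.-1) ^ 2)%:Z) y ->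
  forall m, d_second y m = 0.
Proof.
move=> hp h1 h2 hy m; rewrite /d_second; case: (eps m) => //.
case: ifP => // /dvdzP [c hc].
apply/eqP/negPn/negP => hne.
have [hs ht] := hy _ hne.
move: hs ht; rewrite /sdeg /tdeg /=.
have hcard : (#|ext m| <= p.-1)%N by rewrite -[X in (_ <= X)%N]card_ord max_card.
move: hcard; set s0 := #|ext m|; set sg := (\sum_(i in ext m) (i : nat))%N => hcard.
have hP : p%:Z = (p.-1)%:Z + 1 by rewrite -PoszD addn1 prednK //; lia.
rewrite hc hP in h2 * => hs ht.
have hN : ((p.-1) ^ 2)%:Z = (p.-1)%:Z * (p.-1)%:Z by rewrite -PoszM expnS expn1.
rewrite hN in h1 hs ht.
apply: (@pure (p.-1)%:Z t (jj m - (p.-1)%:Z * (p.-1)%:Z - 1) c s0%:Z sg%:Z).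
- lia.
- exact: h1.
- exact: h2.
- apply/andP; split; lia.
- lia.
- by rewrite hs; ring.
- by rewrite -[RHS]ht; ring.
Qed.

Theorem proposition5p4 (p : nat) (G : grp) :
  prime p -> (5 <= p)%N ->
  (* (1) for s > vcd(G), \hat H^s(G, E_t) = 0 unless t = 2 n eps + 2 p n l *)
  (forall s t : int, vcd p G < s ->
     (exists x : elt p, in_bideg s t x /\ exists m, x m != 0) ->
     exists (e : bool) (l : int),
       t = 2 * (p.-1)%:Z * e%:Z + 2 * p%:Z * (p.-1)%:Z * l) /\
  (* (2) classes in E^{t+1,t} with n^2 <= t <= 4pn surviving to
         E_{2n+2} = E_{2n^2+1} are not targets of d_{2n^2+1} *)
  (forall (t : int) (x : elt p),
     ((p.-1) ^ 2)%:Z <= t -> t <= 4 * p%:Z * (p.-1)%:Z ->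
     in_bideg (t + 1) t x ->
     (forall m, d_first x m = 0) ->
     ~ (exists w, in_bideg (t + 1 - (2 * (p.-1)%:Z + 1)) (t - 2 * (p.-1)%:Z) w
                  /\ x = d_first w) ->
     forall y z : elt p,
       in_bideg (t + 1 - (2 * ((p.-1) ^ 2)%:Z + 1)) (t - 2 * ((p.-1) ^ 2)%:Z) y ->
       (forall m, d_first y m = 0) ->
       in_bideg (t + 1 - (2 * (p.-1)%:Z + 1)) (t - 2 * (p.-1)%:Z) z ->
       x <> (fun m => d_second y m + d_first z m)).
Proof.
move=> hpr hp; split.
  move=> s t _ [x [hx [m hm]]].
  have [_ ht] := hx _ hm.
  exists (eps m), (jj m + (p.-1)%:Z * kk m + p%:Z * (\sum_(i in ext m) (i : nat))%N%:Z).
  rewrite -ht /tdeg /=; ring.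
move=> t x h1 h2 hx hdx hnb y z hy hdy hz hxe.
apply: hnb; exists z; split => //.
rewrite hxe; apply: functional_extensionality => m.
by rewrite (@key _ _ _ hp h1 h2 hy) add0r.
Qed.
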